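(* For any thresholds $a_{ij}$, the adaptive matrix SPRT $\hat D=(\hat T,\hat d)$ satisfies $$\sup_{\theta\in\Theta_i}\mathsf P_\theta(\hat d=j)\le e^{-a_{ij}}\quad\text{for all }i,j\in\mathcal N_0,\ i\ne j.$$ In particular, if $a_{ij}=\log(1/\alpha_{ij})$ then $\hat D\in\mathbb C(\boldsymbol\alpha)$.
   Context: Observations $X_1,X_2,\dots$ with probability measures $\{\mathsf P_\theta,\theta\in\Theta\}$, $\Theta\subseteq\mathbb R^l$; $\mathcal F_n=\sigma(X_1,\dots,X_n)$, $\mathbf X_1^n=(X_1,\dots,X_n)$. The restriction of $\mathsf P_\theta$ to $\mathcal F_n$ has density $p_{\theta,n}(\mathbf X_1^n)=\prod_{t=1}^n f_{\theta,t}(X_t\mid\mathbf X_1^{t-1})$ w.r.t. a $\sigma$-finite measure (each $f_{\theta,t}(\cdot\mid\mathbf X_1^{t-1})$ a conditional density), and these restrictions are mutually absolutely continuous across $\theta$. $\Theta$ is the disjoint union of $\Theta_0,\dots,\Theta_N$ ($N\ge1$) and an indifference zone $\Theta_{\rm in}$ (possibly empty); $\mathcal N_0=\{0,\dots,N\}$. A test $D=(T,d)$: stopping time $T$ w.r.t. $(\mathcal F_n)$ and $\mathcal F_T$-measurable $d\in\mathcal N_0$. $\mathbb C(\boldsymbol\alpha)=\{D:\sup_{\theta\in\Theta_i}\mathsf P_\theta(d=j)\le\alpha_{ij}\ \forall i\ne j\}$. Let $\hat\theta_n=\hat\theta_n(\mathbf X_1^n)$ be $\mathcal F_n$-measurable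 estimators with values in $\Theta$, with a deterministic initial value $\hat\theta_0$. Define $\hat\Lambda_i^*(n)=\prod_{t=1}^n f_{\hat\theta_{t-1},t}(X_t\mid\mathbf X_1^{t-1})\big/\sup_{\theta\in\Theta_i}\prod_{t=1}^n f_{\theta,t}(X_t\mid\mathbf X_1^{t-1})$ and $\hat\lambda_i^*(n)=\log\hat\Lambda_i^*(n)$. Adaptive matrix SPRT (AMSPRT): given thresholds $a_{ij}$, $\hat T_i=\inf\{n\ge1:\hat\lambda_j^*(n)\ge a_{ji}\text{ for all }j\in\mathcal N_0\setminus i\}$, $\hat T=\min_k\hat T_k$, $\hat d=i$ if $\hat T=\hat T_i$ (ties broken by any fixed rule). *)

(* Defs.v *)
From HB Require Import structures.
From mathcomp Require Import all_boot all_order all_algebra.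
From mathcomp Require Import all_classical all_reals all_analysis.
Set Implicit Arguments. Unset Strict Implicit. Unset Printing Implicit Defensive.
Import Order.TTheory GRing.Theory Num.Theory.
Local Open Scope classical_set_scope.
Local Open Scope ring_scope.

Section AMSPRT.
Context {dX : measure_display} (X : measurableType dX).

(* Coordinate cylinders of the canonical sequence space: the observation
   X_{t+1} is the coordinate  w t  of a path  w : nat -> X. *)
Definition coord_cyl : set (set (nat -> X)) :=
  [set [set w | B (w t)] | t in [set: nat] & B in measurable].

(* Canonical sample space Omega = X^N with the product sigma-algebra
   sigma(X_1, X_2, ...). *)
Definition seqspace := g_sigma_algebraType coord_cyl.

(* F_n = sigma(X_1,...,X_n)  (F_0 is the trivial sigma-algebra). *)
Definition filt (n : nat) : set (set seqspace) :=
  <<s [set [set w : seqspace | B (w t)] | t in [set t | (t < n)%N]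
                                        & B in measurable] >>.

Definition prefix (n : nat) (w : seqspace) : seq X := mkseq w n.

Definition cyl (n : nat) (B : set (seq X)) : set seqspace :=
  [set w | B (prefix n w)].

Context {R : realType} {P : Type}.

(* Integration w.r.t. nu_{k+1} (x) ... (x) nu_{k+n} as iterated integrals,
   where k = size s is the length of the history s already observed;
   iint nu n g [::] is the integral of g against nu_1 (x) ... (x) nu_n. *)
Fixpoint iint (nu : nat -> {measure set X -> \bar R}) (n : nat)
  (g : seq X -> \bar R) (s : seq X) : \bar R :=
  match n with
  | 0 => g s
  | n'.+1 => (\int[nu (size s).+1]_x iint nu n' g (rcons s x))%E
  end.

(* prod_{t=1}^{size s} f_{th_{t-1}(x_1^{t-1}), t}(x_t | x_1^{t-1});
   f th t x h  stands for  f_{th,t}(x | h). *)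
Definition lik (f : P -> nat -> X -> seq X -> R) (th : nat -> seq X -> P)
  (s : seq X) : R :=
  \prod_(t < size s) f (th t (take t s)) t.+1 (nth point s t) (take t s).

Definition dens (f : P -> nat -> X -> seq X -> R) (theta : P) (s : seq X) : R :=
  lik f (fun _ _ => theta) s.

(* The event  lambda_j^*(n) >= a, i.e.  Lambda_j^*(n) >= e^a, i.e.
   prod_t f_{hat theta_{t-1},t} >= e^a * sup_{theta in Theta_j} p_{theta,n}
   (ratio conventions c/0 = +oo for c >= 0). *)
Definition lam_ge (f : P -> nat -> X -> seq X -> R) (thhat : nat -> seq X -> P)
  (Thj : set P) (n : nat) (a : R) (w : seqspace) : Prop :=
  ((expR a)%:E * ereal_sup [set (dens f theta (prefix n w))%:E | theta in Thj]
    <= (lik f thhat (prefix n w))%:E)%E.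

Definition hits (f : P -> nat -> X -> seq X -> R) (thhat : nat -> seq X -> P)
  (Th : nat -> set P) (N : nat) (a : nat -> nat -> R) (i n : nat)
  (w : seqspace) : Prop :=
  forall j, (j <= N)%N -> j != i -> lam_ge f thhat (Th j) n (a j i) w.

Definition Ti_eq f thhat Th N a (i n : nat) (w : seqspace) : Prop :=
  (1 <= n)%N /\ hits f thhat Th N a i n w /\
  forall m, (1 <= m)%N -> (m < n)%N -> ~ hits f thhat Th N a i m w.

Definition T_eq f thhat Th N a (n : nat) (w : seqspace) : Prop :=
  exists2 k, (k <= N)%N & Ti_eq f thhat Th N a k n w /\
  forall m, (1 <= m)%N -> (m < n)%N ->
    forall k', (k' <= N)%N -> ~ hits f thhat Th N a k' m w.

Definition decides f thhat Th N a (d : seqspace -> nat) (j : nat) : set seqspace :=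
  [set w | exists n, T_eq f thhat Th N a n w /\ d w = j].

Definition in_C (Pr : P -> {measure set seqspace -> \bar R}) (Th : nat -> set P)
  (N : nat) (alpha : nat -> nat -> R) (E : nat -> set seqspace) : Prop :=
  forall i j, (i <= N)%N -> (j <= N)%N -> i != j ->
    (ereal_sup [set Pr theta (E j) | theta in Th i] <= (alpha i j)%:E)%E.

End AMSPRT.

(* Main.v *)
Require Import Defs.
From HB Require Import structures.
From mathcomp Require Import all_boot all_order all_algebra.
From mathcomp Require Import all_classical all_reals all_analysis measurable_realfun.
Import Order.TTheory GRing.Theory Num.Theory.
Local Open Scope classical_set_scope.
Local Open Scope ring_scope.


Section Int.
Local Open Scope ereal_scope.
Context d (T : measurableType d) (R : realType) (mu : {measure set T -> \bar R}).
Import HBNNSimple.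

Lemma int_le_nn (f g : T -> \bar R) : (forall x, 0 <= f x) ->
  (forall x, f x <= g x) -> \int[mu]_x f x <= \int[mu]_x g x.
Proof.
move=> f0 fg; rewrite !ge0_integralTE //; last by move=> x; exact: le_trans (f0 x) (fg x).
apply: ereal_sup_le => _ [h hf <-]; exists h => // x; exact: le_trans (hf x) (fg x).
Qed.

Lemma sup_addr (S : set \bar R) y z : 0 <= y -> S 0 ->
  (forall s, S s -> s + y <= z) -> ereal_sup S + y <= z.
Proof.
move=> y0 S0 H; case: y y0 H => [r| |] //= y0 H.
  rewrite -leeBrDr //; apply: ge_ereal_sup => s Ss; rewrite leeBrDr //; exact: H.
have := H 0 S0; rewrite add0e leye_eq => /eqP ->; exact: leey.
Qed.

Lemma int_superadd (f g : T -> \bar R) : (forall x, 0 <= f x) -> (forall x, 0 <= g x) ->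
  \int[mu]_x f x + \int[mu]_x g x <= \int[mu]_x (f x + g x).
Proof.
move=> f0 g0; have g0' : 0 <= \int[mu]_x g x by exact: integral_ge0.
rewrite [X in _ <= X]ge0_integralTE; last by move=> x; exact: adde_ge0.
rewrite [X in X + _ <= _]ge0_integralTE //.
apply: sup_addr => //; first by exists nnsfun0 => //; exact: sintegral0.
move=> _ [h hf <-]; rewrite addeC ge0_integralTE //.
apply: sup_addr; first exact: sintegral_ge0.
  by exists nnsfun0 => //; exact: sintegral0.
move=> _ [k kg <-]; rewrite -sintegralD.
apply: ereal_sup_ubound; exists (add_nnsfun k h) => //= x.
by rewrite EFinD addeC; apply: leeD.
Qed.

Lemma int_superadd_sum (F : nat -> T -> \bar R) n : (forall i x, 0 <= F i x) ->
  \sum_(i < n) \int[mu]_x F i x <= \int[mu]_x (\sum_(i < n) F i x).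
Proof.
move=> F0; elim: n => [|n IH].
  by rewrite big_ord0; apply: integral_ge0 => x _; rewrite big_ord0.
rewrite big_ord_recr /=; apply: le_trans (leeD2r _ IH) _.
under [X in _ <= X]eq_integral do rewrite big_ord_recr /=.
apply: int_superadd => // x; exact: sume_ge0.
Qed.
End Int.

Section Iint.
Context {dX : measure_display} (X : measurableType dX) (R : realType).
Context (nu : nat -> {measure set X -> \bar R}).

Lemma iint_ge0 n (g : seq X -> \bar R) s :
  (forall u, size u = n -> (0 <= g (s ++ u))%E) -> (0 <= iint nu n g s)%E.
Proof.
elim: n s => [|n IH] s H /=; first by have := H [::] erefl; rewrite cats0.
apply: integral_ge0 => x _; apply: IH => u su.
by rewrite cat_rcons; apply: H; rewrite /= su.
Qed.

Lemma iint_mono n (g g' : seq X -> \bar R) s :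
  (forall u, size u = n -> (0 <= g (s ++ u))%E) ->
  (forall u, size u = n -> (g (s ++ u) <= g' (s ++ u))%E) ->
  (iint nu n g s <= iint nu n g' s)%E.
Proof.
elim: n s => [|n IH] s H0 H /=; first by have := H [::] erefl; rewrite cats0.
apply: int_le_nn => [x|x].
  apply: iint_ge0 => u su; rewrite cat_rcons; apply: H0; by rewrite /= su.
apply: IH => u su; rewrite cat_rcons; [apply: H0|apply: H]; by rewrite /= su.
Qed.

Lemma iint0 n s : iint nu n (fun _ => 0%E) s = 0%E.
Proof.
elim: n s => [|n IH] s //=.
by under eq_integral do rewrite IH; rewrite integral0.
Qed.
End Iint.

Section Key.
Context {dX : measure_display} (X : measurableType dX) (R : realType) (P : Type).
Context (nu : nat -> {measure set X -> \bar R}).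
Context (f : P -> nat -> X -> seq X -> R) (thhat : nat -> seq X -> P) (Theta : set P).
Hypothesis Hth : forall n s, size s = n -> Theta (thhat n s).
Hypothesis Hdens : forall th t s, Theta th -> (1 <= t)%N -> size s = t.-1 ->
     (forall x, 0 <= f th t x s) /\ measurable_fun setT (fun x => f th t x s) /\
     (\int[nu t]_x (f th t x s)%:E = 1)%E.

Lemma lik_rcons th s x : lik f th (rcons s x) = lik f th s * f (th (size s) s) (size s).+1 x s.
Proof.
rewrite /lik size_rcons big_ord_recr /= -cats1 take_size_cat // nth_cat ltnn subnn /=.
congr (_ * _); apply: eq_bigr => i _.
by rewrite take_cat nth_cat ltn_ord.
Qed.

Lemma lik_nil th : lik f th [::] = 1.
Proof. by rewrite /lik big_ord0. Qed.

Lemma lik_ge0 s : 0 <= lik f thhat s.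
Proof.
rewrite /lik; apply: prodr_ge0 => i _.
have si : size (take i s) = i by rewrite size_takel // ltnW.
exact: (@Hdens _ i.+1 _ (Hth _ _ si) isT si).1.
Qed.

Lemma dens_ge0 th s : Theta th -> 0 <= dens f th s.
Proof.
move=> Th; rewrite /dens /lik; apply: prodr_ge0 => i _.
have si : size (take i s) = i by rewrite size_takel // ltnW.
exact: (@Hdens _ i.+1 _ Th isT si).1.
Qed.

Variables (c : R) (C : nat -> set (seq X)).
Hypothesis c0 : 0 <= c.
Hypothesis stop : forall n m s, (n < m)%N -> C m s -> ~ C n (take n s).

Definition gk n (s : seq X) : \bar R := ((c * lik f thhat s) * \1_(C n) s)%:E.

Lemma gk_ge0 n s : (0 <= gk n s)%E.
Proof.
rewrite /gk lee_fin; apply: mulr_ge0; first exact: mulr_ge0 (lik_ge0 s).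
by rewrite indicE.
Qed.

Lemma key d s : (\sum_(j < d.+1) iint nu j (gk (size s + j)) s <= (c * lik f thhat s)%:E)%E.
Proof.
elim: d s => [|d IH] s.
  rewrite big_ord1 /= addn0 /gk lee_fin indicE.
  case: (s \in C (size s)); rewrite ?mulr1 ?mulr0 //.
  exact: mulr_ge0 (lik_ge0 s).
rewrite big_ord_recl /= addn0.
under eq_bigr => i _ do rewrite /bump leq0n add1n add0n.
have [Cs|nCs] := pselect (C (size s) s).
  rewrite big1 ?adde0.
    by rewrite /gk indicE mem_set // mulr1.
  move=> i _; apply/eqP; rewrite eq_le; apply/andP; split; last first.
    by apply: (@iint_ge0 _ _ _ _ i.+1) => u _; exact: gk_ge0.
  rewrite -[X in (_ <= X)%E](@iint0 _ _ _ nu i.+1 s); apply: (@iint_mono _ _ _ _ i.+1) => u su; first exact: gk_ge0.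
  rewrite /gk indicE memNset ?mulr0 // => Cu.
  have lt : (size s < size s + i.+1)%N by rewrite -addn1 leq_add2l.
  by have := @stop (size s) (size s + i.+1) (s ++ u) lt Cu; rewrite take_size_cat.
rewrite {1}/gk indicE memNset // mulr0 add0e.
apply: le_trans (@int_superadd_sum _ _ _ (nu (size s).+1) (fun i x => iint nu i (gk (size s + i.+1)) (rcons s x)) d.+1 _) _.
  by move=> i x; apply: iint_ge0 => u _; exact: gk_ge0.
apply: (@le_trans _ _ (\int[nu (size s).+1]_x ((c * lik f thhat s)%:E * (f (thhat (size s) s) (size s).+1 x s)%:E))%E).
  apply: int_le_nn => x.
    by apply: sume_ge0 => i _; apply: iint_ge0 => u _; exact: gk_ge0.
  have := IH (rcons s x); rewrite lik_rcons mulrA EFinM.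
  by under eq_bigr do rewrite size_rcons addSnnS.
have [f0 [mf intf]] := @Hdens _ (size s).+1 s (@Hth _ s (erefl (size s))) isT (erefl _).
rewrite ge0_integralZl //.
- by rewrite intf mule1.
- by apply/measurable_EFinP.
- by move=> x _; rewrite lee_fin.
- by rewrite lee_fin; exact: mulr_ge0 (lik_ge0 s).
Qed.
End Key.

Section Sets.
Context {dX : measure_display} (X : measurableType dX).

Lemma pfx_take n m (w : seqspace X) : (n <= m)%N -> take n (Defs.prefix m w) = Defs.prefix n w.
Proof.
move=> nm; apply: (@eq_from_nth _ point).
  by rewrite size_takel ?size_mkseq.
move=> i; rewrite size_takel ?size_mkseq // => im.
by rewrite nth_take // !nth_mkseq // (leq_trans im nm).
Qed.

Lemma filt_det n (A : set (seqspace X)) : filt n A ->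
  forall w w', Defs.prefix n w = Defs.prefix n w' -> A w -> A w'.
Proof.
pose Dt := [set A : set (seqspace X) | forall w w', Defs.prefix n w = Defs.prefix n w' -> (A w <-> A w')].
suff : filt n `<=` Dt by move=> H FA w w' pw; have := H _ FA w w' pw => -[].
apply: smallest_sub.
  split.
  - by move=> w w' _.
  - move=> B HB w w' pw; have := HB w w' pw => -[h1 h2] /=.
    by split => -[_ nB]; split => //; [move=> /h2|move=> /h1].
  - move=> F HF w w' pw; split => -[k _ Fk]; exists k => //; have := HF k w w' pw => -[h1 h2];
    [exact: h1|exact: h2].
move=> _ [t /= tn [B mB <-]] w w' pw /=.
have : nth point (Defs.prefix n w) t = nth point (Defs.prefix n w') t by rewrite pw.
by rewrite !nth_mkseq // => ->.
Qed.

Lemma filt_meas n (A : set (seqspace X)) : filt n A -> measurable A.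
Proof.
apply: smallest_sub; first exact: sigma_algebra_measurable.
move=> _ [t /= tn [B mB <-]].
apply: sub_gen_smallest; exists t => //; exists B => //.
Qed.
End Sets.

Theorem lemma2
  (dX : measure_display) (X : measurableType dX) (R : realType) (l N : nat)
  (* parameter space Theta = Theta_0 U ... U Theta_N U Theta_in in R^l *)
  (Theta Thin : set 'rV[R]_l) (Th : nat -> set 'rV[R]_l)
  (* reference sigma-finite measures nu_t for the observation X_t *)
  (nu : nat -> {measure set X -> \bar R})
  (* f th t x h = f_{th,t}(x | h) *)
  (f : 'rV[R]_l -> nat -> X -> seq X -> R)
  (Pr : 'rV[R]_l -> probability (seqspace X) R)
  (* estimators hat theta_n (X_1^n); hat theta_0 = thhat 0 [::] *)
  (thhat : nat -> seq X -> 'rV[R]_l)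
  (a : nat -> nat -> R)
  (d : seqspace X -> nat) :
  (1 <= N)%N ->
  (forall i, (i <= N)%N -> Th i `<=` Theta) -> Thin `<=` Theta ->
  Theta = Thin `|` \bigcup_(i in [set i | (i <= N)%N]) Th i ->
  (forall i j, (i <= N)%N -> (j <= N)%N -> i != j -> [disjoint Th i & Th j]) ->
  (forall i, (i <= N)%N -> [disjoint Th i & Thin]) ->
  (forall t, sigma_finite setT (nu t)) ->
  (* each f_{th,t}(. | x_1^{t-1}) is a conditional density w.r.t. nu_t *)
  (forall th t s, Theta th -> (1 <= t)%N -> size s = t.-1 ->
     (forall x, 0 <= f th t x s) /\ measurable_fun setT (fun x => f th t x s) /\
     (\int[nu t]_x (f th t x s)%:E = 1)%E) ->
  (* the restriction of P_theta to F_n has density p_{theta,n} w.r.t.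
     nu_1 (x) ... (x) nu_n *)
  (forall th n B, Theta th -> filt n (cyl n B) ->
     Pr th (cyl n B) = iint nu n (fun s => (\1_B s)%:E * (dens f th s)%:E)%E [::]) ->
  (* these restrictions are mutually absolutely continuous *)
  (forall th th' n A, Theta th -> Theta th' -> filt n A ->
     Pr th A = 0%E -> Pr th' A = 0%E) ->
  (* estimators are F_n-measurable (functions of X_1^n) with values in Theta *)
  (forall n s, size s = n -> Theta (thhat n s)) ->
  (* hat d = i when hat T = hat T_i (ties broken by an arbitrary rule) *)
  (forall n w, T_eq f thhat Th N a n w ->
     (d w <= N)%N /\ Ti_eq f thhat Th N a (d w) n w) ->
  (* (hat T, hat d) is a test: {hat T = n, hat d = j} is F_n-measurable *)
  (forall n j, filt n [set w | T_eq f thhat Th N a n w /\ d w = j]) ->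
  (forall i j, (i <= N)%N -> (j <= N)%N -> i != j ->
     (ereal_sup [set Pr th (decides f thhat Th N a d j) | th in Th i]
        <= (expR (- a i j))%:E)%E)
  /\
  (forall alpha : nat -> nat -> R,
     (forall i j, (i <= N)%N -> (j <= N)%N -> i != j -> 0 < alpha i j) ->
     (forall i j, (i <= N)%N -> (j <= N)%N -> i != j -> a i j = ln (alpha i j)^-1) ->
     in_C (fun th => Pr th) Th N alpha (decides f thhat Th N a d)).
Proof.
move=> N1 ThT ThinT ThetaE disj disjin sfin Hdens HPr Hac Hth Hd Hmeas.
have Tstop : forall n m (w w' : seqspace X), (n < m)%N ->
    Defs.prefix n w = Defs.prefix n w' ->
    T_eq f thhat Th N a n w -> T_eq f thhat Th N a m w' -> False.
  move=> n m w w' nm pw [k kN [[n1 [hk _]] _]] [k' _ [_ Hm]].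
  apply: (Hm n n1 nm k kN); move: hk; by rewrite /hits /lam_ge pw.
have part1 : forall i j, (i <= N)%N -> (j <= N)%N -> i != j ->
     (ereal_sup [set Pr th (decides f thhat Th N a d j) | th in Th i]
        <= (expR (- a i j))%:E)%E.
  move=> i j iN jN ij.
  apply: ge_ereal_sup => _ [th thi <-].
  pose E n := [set w : seqspace X | T_eq f thhat Th N a n w /\ d w = j].
  pose B n := [set s : seq X | exists w, Defs.prefix n w = s /\ E n w].
  have EB n : E n = cyl n (B n).
    apply/seteqP; split => w.
      by move=> Ew; exists w.
    move=> [w' [pw Ew']]; exact: (@filt_det _ _ _ _ (Hmeas n j) _ _ pw Ew').
  have mE n : measurable (E n) := @filt_meas _ _ _ _ (Hmeas n j).
  have tE : trivIset setT E.
    move=> n m _ _ [w [[Tn _] [Tm _]]]; case: (ltngtP n m) => // nm; exfalso.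
      exact: (Tstop n m w w nm erefl Tn Tm).
    exact: (Tstop m n w w nm erefl Tm Tn).
  have decE : decides f thhat Th N a d j = \bigcup_n E n.
    apply/seteqP; split => w [n].
      by move=> [Tn dj]; exists n.
    by move=> _ En; exists n.
  rewrite decE.
  have Hs := @measure_sigma_additive _ _ _ (Pr th) E mE tE.
  rewrite -(cvg_lim _ Hs) //.
  apply: lime_le; first by apply/cvg_ex; eexists; exact: Hs.
  apply: nearW => n.
  case: n => [|n]; first by rewrite big_geq // lee_fin expR_ge0.
  rewrite big_mkord.
  have thT : Theta th := ThT i iN th thi.
  have Hdens' := Hdens.
  have c0 : 0 <= expR (- a i j) := expR_ge0 _.
  have stopB : forall n m s, (n < m)%N -> B m s -> ~ B n (take n s).
    move=> n' m s nm [w [<- [Tm _]]] [w' [pw' [Tn _]]].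
    rewrite pfx_take in pw'; last exact: ltnW.
    exact: (Tstop n' m w' w nm pw' Tn Tm).
  have K := @key _ _ _ _ nu f thhat Theta Hth Hdens _ _ c0 stopB n [::]; rewrite lik_nil mulr1 in K.
  apply: le_trans K.
  apply: lee_sum => k _.
  rewrite EB; change (Pr th (cyl k (B k)) <= iint nu k (gk X R 'rV[R]_l f thhat (expR (- a i j)) B (size (@nil X) + k)) [::])%E.
  rewrite HPr //; last by rewrite -EB; exact: Hmeas.
  apply: iint_mono => u su.
    apply: mule_ge0; rewrite lee_fin; first by rewrite indicE.
    exact: (@dens_ge0 _ _ _ _ nu f Theta Hdens _ _ thT).
  rewrite /gk /= add0n indicE.
  case: (boolP (u \in B k)) => Hu; last by rewrite !mulr0 mul0e.
  rewrite mulr1 mul1e.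
  move: Hu; rewrite inE => -[w [pw [Tk dj]]].
  have [_ Ti] := Hd k w Tk; rewrite dj in Ti.
  have [_ [hj _]] := Ti.
  have := hj i iN ij; rewrite /lam_ge pw => hl.
  have hs : ((dens f th u)%:E <= ereal_sup [set (dens f theta u)%:E | theta in Th i])%E.
    by apply: ereal_sup_ubound; exists th.
  have h1 : expR (a i j) * dens f th u <= lik f thhat u.
    rewrite -lee_fin EFinM; apply: le_trans hl.
    by apply: lee_wpmul2l => //; rewrite lee_fin expR_ge0.
  rewrite lee_fin -[dens f th u](mulKf (x := expR (a i j))); last by rewrite gt_eqF ?expR_gt0.
  by rewrite expRN; apply: ler_wpM2l => //; rewrite invr_ge0 expR_ge0.
split => //.
move=> alpha apos aE i j iN jN ij.
have := part1 i j iN jN ij.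
rewrite aE // expRN lnK ?invrK //.
by rewrite posrE invr_gt0 apos.
Qed.
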